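(* Let $\lambda\in\mathbb{R}$ and let $H_0:\mathbb{R}^n\times[0,T]\times\mathbb{R}^n\to\mathbb{R}$ satisfy: (a) $|H_0(x,t,p)-H_0(y,t,p)|\le C_1(\beta+|p|)|x-y|$ with $C_1\ge0$, $\beta\in\{0,1\}$; (b) $|H_0(x,t,p)-H_0(x,t,q)|\le(A_2|x|+B_2)|p-q|$ with $A_2,B_2\ge0$; (c) $p\mapsto H_0(x,t,p)$ convex; (d) $H_0\in C^2$; (e) $D_{pp}H_0$ positive definite everywhere. Let $u\in C(\mathbb{R}^n\times[0,T))$ be a viscosity solution of $$u_t+\lambda u+H_0(x,t,D_xu)=0\ \text{in }\mathbb{R}^n\times(0,T),\qquad u(x,0)=u_0(x).$$ Let $u$ be differentiable at $(x,t)\in\mathbb{R}^n\times(0,T)$ and let $(\xi,\eta)\in C^1([0,t];\mathbb{R}^n)^2$ solve $\xi'(s)=D_pH_0(\xi(s),s,\eta(s))$, $\eta'(s)=-D_xH_0(\xi(s),s,\eta(s))-\lambda\eta(s)$ on $[0,t]$ with $\xi(t)=x$, $\eta(t)=D_xu(x,t)$. Then $$|D_xu(x,t)-e^{-\lambda t}\eta(0)|\le\frac{C_1\beta}{C_1+\lambda}(e^{C_1t}-e^{-\lambda t})+|D_xu(x,t)|(e^{C_1t}-1)\ \ (\lambda\ne-C_1),$$ $$|D_xu(x,t)-e^{C_1t}\eta(0)|\le C_1\beta te^{C_1t}+|D_xu(x,t)|(e^{C_1t}-1)\ \ (\lambda=-C_1),$$ $$|D_xu(x,t)-e^{-\lambda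 t}\eta(0)|\le\frac{C_1\beta}{C_1-\lambda}(e^{(C_1-\lambda)t}-1)+|\eta(0)|(e^{(C_1-\lambda)t}-e^{-\lambda t})\ \ (\lambda\ne C_1),$$ $$|D_xu(x,t)-e^{-C_1t}\eta(0)|\le C_1\beta t+|\eta(0)|(1-e^{-C_1t})\ \ (\lambda=C_1).$$ Consequently $|D_xu(x,t)|\ge|\eta(0)|e^{-(C_1+\lambda)t}-\frac{C_1\beta}{C_1+\lambda}(1-e^{-(C_1+\lambda)t})$ if $\lambda\ne-C_1$; $|D_xu(x,t)|\ge|\eta(0)|-C_1\beta t$ if $\lambda=-C_1$; $|D_xu(x,t)|\le|\eta(0)|e^{(C_1-\lambda)t}+\frac{C_1\beta}{C_1-\lambda}(e^{(C_1-\lambda)t}-1)$ if $\lambda\ne C_1$; $|D_xu(x,t)|\le|\eta(0)|+C_1\beta t$ if $\lambda=C_1$.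
   Context: $T>0$, $u_0:\mathbb{R}^n\to\mathbb{R}$ Lipschitz. Viscosity solution of $u_t+F(x,t,u,D_xu)=0$, $u(\cdot,0)=u_0$: $u\in C(\mathbb{R}^n\times[0,T))$ with $u(\cdot,0)=u_0$ such that for every $\phi\in C^1(\mathbb{R}^n\times(0,T))$, if $u-\phi$ has a local max (resp. min) at $(x,t)\in\mathbb{R}^n\times(0,T)$ then $\phi_t+F(x,t,u(x,t),D_x\phi(x,t))\le0$ (resp. $\ge0$). Here $F(x,t,u,p)=\lambda u+H_0(x,t,p)$. *)

(* Defs.v *)
From HB Require Import structures.
From mathcomp Require Import all_boot all_order all_algebra.
From mathcomp Require Import all_classical all_reals all_analysis.
Set Implicit Arguments. Unset Strict Implicit. Unset Printing Implicit Defensive.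
Import Order.TTheory GRing.Theory Num.Theory.
Import numFieldNormedType.Exports.
Local Open Scope classical_set_scope.
Local Open Scope ring_scope.

Definition enorm {R : realType} {n : nat} (v : 'rV[R]_n) : R :=
  Num.sqrt (\sum_(i < n) v 0 i ^+ 2).

Definition uncurry_xt {R : realType} {n : nat} (u : 'rV[R]_n -> R -> R)
  : 'rV[R]_n * R -> R := fun z => u z.1 z.2.

Definition gradx {R : realType} {n : nat} (f : 'rV[R]_n * R -> R)
  (z : 'rV[R]_n * R) : 'rV[R]_n :=
  \row_(i < n) derive f z ((delta_mx 0 i : 'rV[R]_n), (0 : R)).
Definition partt {R : realType} {n : nat} (f : 'rV[R]_n * R -> R)
  (z : 'rV[R]_n * R) : R :=
  derive f z ((0 : 'rV[R]_n), (1 : R)).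

Definition C1_on {R : realType} {V : normedModType R} (f : V -> R) (D : set V)
  : Prop :=
  (forall z, D z -> differentiable f z) /\
  (forall (v : V) z, D z -> {for z, continuous (fun w => derive f w v)}).

Definition C2_on {R : realType} {V : normedModType R} (f : V -> R) (D : set V)
  : Prop :=
  C1_on f D /\ forall v : V, C1_on (fun w => derive f w v) D.

Definition Hunc {R : realType} {n : nat} (H0 : 'rV[R]_n -> R -> 'rV[R]_n -> R)
  : 'rV[R]_n * R * 'rV[R]_n -> R := fun z => H0 z.1.1 z.1.2 z.2.

Definition evec {R : realType} {n : nat} (i : 'I_n) : 'rV[R]_n := delta_mx 0 i.

Definition DpH {R : realType} {n : nat} (H0 : 'rV[R]_n -> R -> 'rV[R]_n -> R)
  (x : 'rV[R]_n) (s : R) (p : 'rV[R]_n) : 'rV[R]_n :=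
  \row_(i < n) derive (Hunc H0) (x, s, p) ((0 : 'rV[R]_n), (0 : R), evec i).
Definition DxH {R : realType} {n : nat} (H0 : 'rV[R]_n -> R -> 'rV[R]_n -> R)
  (x : 'rV[R]_n) (s : R) (p : 'rV[R]_n) : 'rV[R]_n :=
  \row_(i < n) derive (Hunc H0) (x, s, p) (evec i, (0 : R), (0 : 'rV[R]_n)).
Definition DppH {R : realType} {n : nat} (H0 : 'rV[R]_n -> R -> 'rV[R]_n -> R)
  (x : 'rV[R]_n) (s : R) (p : 'rV[R]_n) : 'M[R]_n :=
  \matrix_(i < n, j < n)
    derive (fun w => derive (Hunc H0) w ((0 : 'rV[R]_n), (0 : R), evec i))
      (x, s, p) ((0 : 'rV[R]_n), (0 : R), evec j).

Definition posdef {R : realType} {n : nat} (M : 'M[R]_n) : Prop :=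
  forall v : 'rV[R]_n, v != 0 -> 0 < (v *m M *m v^T) 0 0.

(* f' is the derivative of f on the closed interval [a,b]
   (one-sided at the endpoints). *)
Definition deriv_on {R : realType} {n : nat} (a b : R) (f f' : R -> 'rV[R]_n)
  : Prop :=
  forall s, a <= s <= b ->
    (fun h : R => h^-1 *: (f (s + h) - f s))
      @ (within [set h : R | a <= s + h <= b] (0 : R)^') --> f' s.

Definition visc_solution {R : realType} {n : nat} (T lam : R)
  (H0 : 'rV[R]_n -> R -> 'rV[R]_n -> R) (u0 : 'rV[R]_n -> R)
  (u : 'rV[R]_n -> R -> R) : Prop :=
  {within [set z : 'rV[R]_n * R | 0 <= z.2 < T], continuous (uncurry_xt u)} /\
  (forall x, u x 0 = u0 x) /\
  (forall phi : 'rV[R]_n * R -> R,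
     C1_on phi [set z : 'rV[R]_n * R | 0 < z.2 < T] ->
     forall (x : 'rV[R]_n) (t : R), 0 < t < T ->
     ((\forall z \near (x, t),
         uncurry_xt u z - phi z <= uncurry_xt u (x, t) - phi (x, t)) ->
       partt phi (x, t) + lam * u x t + H0 x t (gradx phi (x, t)) <= 0) /\
     ((\forall z \near (x, t),
         uncurry_xt u (x, t) - phi (x, t) <= uncurry_xt u z - phi z) ->
       0 <= partt phi (x, t) + lam * u x t + H0 x t (gradx phi (x, t)))).

(* Main.v *)
Require Import Defs.
From HB Require Import structures.
From mathcomp Require Import all_boot all_order all_algebra.
From mathcomp Require Import all_classical all_reals all_analysis.
From mathcomp Require Import ring lra.
Import Order.TTheory GRing.Theory Num.Theory.
Import numFieldNormedType.Exports.
Local Open Scope classical_set_scope.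
Local Open Scope ring_scope.

Section S.
Context {R : realType}.

Definition sderiv_on (a b : R) (f f' : R -> R) : Prop :=
  forall s, a <= s <= b ->
    (fun h : R => h^-1 * (f (s + h) - f s))
      @ (within [set h : R | a <= s + h <= b] (0 : R)^') --> f' s.


Lemma deriv_on_comp n (a b : R) (f f' : R -> 'rV[R]_n) (i : 'I_n) :
  deriv_on a b f f' -> sderiv_on a b (fun r => f r 0 i) (fun r => f' r 0 i).
Proof.
move=> D s sab.
have := cvg_comp _ _ (D s sab) (@coord_continuous R 1 n 0 i (f' s)).
set g := (_ \o _); have -> : g = (fun h : R => h^-1 * (f (s + h) 0 i - f s 0 i)).
  by rewrite funeqE => h; rewrite /g /= !mxE.
done.
Qed.

Lemma within_near_cvg (T : Type) (U : topologicalType) (F : set_system T) {FF : Filter F}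
  (A : set T) (g : T -> U) (l : U) :
  (\forall x \near F, A x) -> g @ within A F --> l -> g @ F --> l.
Proof.
move=> FA gl P /gl; rewrite /= /within /= => h.
by apply: filter_app2 FA h; apply: nearW => x Ax; apply.
Qed.

Lemma abs_bounds (x e : R) : `|x| < e -> - e < x < e.
Proof. by move=> h; rewrite -ltr_norml. Qed.

Lemma near0_itv (a s b : R) : a < s < b -> \forall h \near (0:R), a < s + h < b.
Proof.
move=> /andP[ha sb].
exists (Num.min (s - a) (b - s)) => /=; first by rewrite lt_min !subr_gt0 ha sb.
move=> h; rewrite /ball/= sub0r normrN => /abs_bounds /andP[h1 h2].
have m1 : Num.min (s-a) (b-s) <= s-a by rewrite ge_min lexx.
have m2 : Num.min (s-a) (b-s) <= b-s by rewrite ge_min lexx orbT.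
apply/andP; split; lra.
Qed.

Lemma sderiv_is_derive a b f f' s : sderiv_on a b f f' -> a < s < b ->
  is_derive s 1 f (f' s).
Proof.
move=> D sab.
have L : (fun h : R => h^-1 * (f (s + h) - f s)) @ (0:R)^' --> f' s.
  apply: (@within_near_cvg R R ((0:R)^') _ [set h | a <= s+h <= b]); last first.
    by apply: D; case/andP: sab => ? ?; rewrite !ltW.
  have N := near0_itv _ _ _ sab; apply: cvg_within.
  rewrite nbhs_simpl.
  by apply: (filterS _ N) => h /andP[h1 h2]; rewrite /= !ltW.
have E : (fun h : R => h^-1 *: ((f \o shift s) (h *: 1) - f s)) = 
   (fun h : R => h^-1 * (f (s + h) - f s)).
  rewrite funeqE => h /=. have -> : h%:A = h :> R by exact: mulr1. by rewrite [h + s]addrC.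
apply: DeriveDef; first by apply/cvg_ex; exists (f' s); rewrite E.
by rewrite /derive E; apply: cvg_lim.
Qed.

Lemma sderiv_diff0 a b f f' s : sderiv_on a b f f' -> a <= s <= b ->
  (fun h => f (s + h) - f s) @ within [set h : R | a <= s + h <= b] (0 : R)^' --> (0:R).
Proof.
move=> D sab; have G := D s sab.
set F := within _ _ in G *.
have FF : Filter F by apply: within_filter.
have h0 : (fun h : R => h) @ F --> (0:R).
  have W1 : F --> (0:R)^' by exact: cvg_within.
  have W2 : (0:R)^' --> (0:R) by exact: cvg_within.
  exact: cvg_trans W1 W2.
have K := @cvgM _ _ F FF _ _ _ _ h0 G; rewrite mul0r in K.
have E : {near F, (fun h => h * (h^-1 * (f (s + h) - f s))) =1 (fun h => f (s + h) - f s)}.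
  rewrite /F near_withinE /dnbhs near_withinE; apply: nearW => h hn0 _ /=.
  by rewrite mulrA mulfV ?mul1r.
have := cvg_trans (near_eq_cvg E) K. exact.
Qed.

Lemma near0_abs (e : R) : 0 < e -> \forall h \near (0:R), - e < h < e.
Proof.
move=> e0; exists e => //= h; rewrite /ball/= sub0r normrN => /abs_bounds //.
Qed.

Lemma sderiv_cont a b f f' : a < b -> sderiv_on a b f f' ->
  {within `[a, b], continuous f}.
Proof.
move=> ab D; apply/continuous_within_itvP => //; split.
- move=> s; rewrite in_itv /= => sab.
  have [d _] := sderiv_is_derive _ _ _ _ _ D sab.
  exact/differentiable_continuous/derivable1_diffP.
- apply/cvgrPdist_lt => e e0.
  have Z := @sderiv_diff0 _ _ _ _ a D; rewrite lexx ltW // in Z.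
  move/cvgrPdist_lt/(_ e e0): (Z isT) => {}Z.
  rewrite near_withinE /dnbhs near_withinE in Z.
  rewrite /at_right near_withinE.
  apply/(@nbhs0P R R (fun u => a < u -> `|f a - f u| < e)).
  have ba : 0 < b - a by rewrite subr_gt0.
  have N := near0_abs _ ba.
  apply: filterS (filterI Z N) => h [Zh /andP[h1 h2]] ah.
  have := Zh; rewrite sub0r opprB; apply.
    by apply/eqP => h0; move: ah; rewrite h0 addr0 ltxx.
  by apply/andP; split; rewrite ?ltW //; lra.
- apply/cvgrPdist_lt => e e0.
  have Z := @sderiv_diff0 _ _ _ _ b D; rewrite lexx ltW // in Z.
  move/cvgrPdist_lt/(_ e e0): (Z isT) => {}Z.
  rewrite near_withinE /dnbhs near_withinE in Z.
  rewrite /at_left near_withinE.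
  apply/(@nbhs0P R R (fun u => u < b -> `|f b - f u| < e)).
  have ba : 0 < b - a by rewrite subr_gt0.
  have N := near0_abs _ ba.
  apply: filterS (filterI Z N) => h [Zh /andP[h1 h2]] ah.
  have := Zh; rewrite sub0r opprB; apply.
    by apply/eqP => h0; move: ah; rewrite h0 addr0 ltxx.
  by apply/andP; split; rewrite ?ltW //; lra.
Qed.
End S.

Section E.
Context {R : realType} {n : nat}.
Implicit Types v w : 'rV[R]_n.

Definition dotv v w : R := \sum_(i < n) v 0 i * w 0 i.

Lemma sumsq_ge0 v : 0 <= \sum_(i < n) v 0 i ^+ 2.
Proof. by apply: sumr_ge0 => i _; rewrite sqr_ge0. Qed.

Lemma enorm_ge0 v : 0 <= enorm v.
Proof. exact: sqrtr_ge0. Qed.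

Lemma enorm_sq v : enorm v ^+ 2 = \sum_(i < n) v 0 i ^+ 2.
Proof. by rewrite /enorm sqr_sqrtr // sumsq_ge0. Qed.

Lemma dotvv v : dotv v v = enorm v ^+ 2.
Proof. by rewrite enorm_sq; apply: eq_bigr => i _; rewrite expr2. Qed.

Lemma enorm0P v : enorm v = 0 -> forall i, v 0 i = 0.
Proof.
move=> h i; have : \sum_(j < n) v 0 j ^+ 2 = 0 by rewrite -enorm_sq h expr0n.
move/psumr_eq0P => /(_ (fun j _ => sqr_ge0 (v 0 j)) i isT) /eqP.
by rewrite sqrf_eq0 => /eqP.
Qed.

Lemma dot_expand v w (a b : R) :
  \sum_(i < n) (a * v 0 i - b * w 0 i) ^+ 2 =
  a ^+ 2 * enorm v ^+ 2 - 2 * a * b * dotv v w + b ^+ 2 * enorm w ^+ 2.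
Proof.
rewrite !enorm_sq /dotv !mulr_sumr -sumrB -big_split /=.
by apply: eq_bigr => i _; ring.
Qed.

Lemma cauchy_schwarz v w : dotv v w <= enorm v * enorm w.
Proof.
set A := enorm v; set B := enorm w.
have hA : 0 <= A := enorm_ge0 v; have hB : 0 <= B := enorm_ge0 w.
have := dot_expand v w B A; rewrite -/A -/B => E.
have H : 0 <= A * B * (A * B - dotv v w).
  have : 0 <= \sum_(i < n) (B * v 0 i - A * w 0 i) ^+ 2.
    by apply: sumr_ge0 => i _; rewrite sqr_ge0.
  rewrite E => H; nra.
have [AB0|ABpos] := eqVneq (A * B) 0.
  move: AB0 => /eqP; rewrite mulf_eq0 => /orP[/eqP A0|/eqP B0].
    rewrite A0 mul0r /dotv big1 // => i _; by rewrite (@enorm0P v A0) mul0r.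
  rewrite B0 mulr0 /dotv big1 // => i _; by rewrite (@enorm0P w B0) mulr0.
have ABgt : 0 < A * B by rewrite lt_def ABpos mulr_ge0.
by rewrite -subr_ge0; move: H; rewrite pmulr_rge0.
Qed.

Lemma dotvN v w : dotv (- v) w = - dotv v w.
Proof. by rewrite /dotv -sumrN; apply: eq_bigr => i _; rewrite mxE mulNr. Qed.

Lemma abs_cauchy_schwarz v w : `|dotv v w| <= enorm v * enorm w.
Proof.
have h1 := cauchy_schwarz v w; have h2 := cauchy_schwarz (- v) w.
have eN : enorm (- v) = enorm v.
  by rewrite /enorm; congr Num.sqrt; apply: eq_bigr => i _; rewrite mxE sqrrN.
rewrite dotvN eN in h2; rewrite ler_norml; apply/andP; split; lra.
Qed.

Lemma enormZ (k : R) v : enorm (k *: v) = `|k| * enorm v.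
Proof.
rewrite /enorm -sqrtr_sqr -sqrtrM ?sqr_ge0 // mulr_sumr; congr Num.sqrt.
by apply: eq_bigr => i _; rewrite mxE exprMn.
Qed.

Lemma enormN v : enorm (- v) = enorm v.
Proof. by rewrite -scaleN1r enormZ normrN normr1 mul1r. Qed.

Lemma enormD v w : enorm (v + w) <= enorm v + enorm w.
Proof.
have h : enorm (v + w) ^+ 2 <= (enorm v + enorm w) ^+ 2.
  rewrite enorm_sq.
  have -> : \sum_(i < n) (v + w) 0 i ^+ 2 = enorm v ^+ 2 + 2 * dotv v w + enorm w ^+ 2.
    rewrite !enorm_sq /dotv mulr_sumr -!big_split /=.
    by apply: eq_bigr => i _; rewrite mxE; ring.
  have := cauchy_schwarz v w; nra.
have := enorm_ge0 (v + w); have := enorm_ge0 v; have := enorm_ge0 w; nra.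
Qed.

Lemma enormB v w : enorm (v - w) = enorm (w - v).
Proof. by rewrite -enormN opprB. Qed.

End E.

Section G.
Context {R : realType} {n : nat}.

Lemma deriv_dir_bound (f : 'rV[R]_n * R * 'rV[R]_n -> R) (x : 'rV[R]_n) (s : R)
  (p v : 'rV[R]_n) (K : R) :
  differentiable f (x, s, p) ->
  (forall y, `|f (y, s, p) - f (x, s, p)| <= K * enorm (y - x)) ->
  `|derive f (x, s, p) (v, 0, 0)| <= K * enorm v.
Proof.
move=> df hK.
have dv := @diff_derivable _ _ _ f (x, s, p) (v, 0, 0) df.
have B : \forall h \near (0:R)^', 
    `|h^-1 *: ((f \o shift (x, s, p)) (h *: (v, (0:R), (0:'rV[R]_n))) - f (x, s, p))| <= K * enorm v.
  rewrite /dnbhs near_withinE; apply: nearW => h hn0 /=.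
  have -> : (h *: (v, (0:R), (0:'rV[R]_n)) + (x, s, p)) = (x + h *: v, s, p).
    transitivity ((h *: v + x, h *: (0:R) + s), h *: (0:'rV[R]_n) + p); first by [].
    by rewrite !scaler0 !add0r addrC.
  have E : enorm (x + h *: v - x) = `|h| * enorm v by rewrite (addrC x) addrK enormZ.
  rewrite normrZ; have := hK (x + h *: v); rewrite E => H.
  rewrite normfV mulrC ler_pdivrMr ?normr_gt0 //.
  by rewrite mulrAC -mulrA.
rewrite /derive ler_norml; apply/andP; split.
  apply: (@limr_ge _ _ _ R _ _ dv); apply: filterS B => h; rewrite ler_norml => /andP[] //.
apply: (@limr_le _ _ _ R _ _ dv); apply: filterS B => h; rewrite ler_norml => /andP[] //.
Qed.

Lemma grad_enorm_le (f : 'rV[R]_n * R * 'rV[R]_n -> R) z (K : R) :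
  differentiable f z -> 0 <= K ->
  (forall v : 'rV[R]_n, `|derive f z (v, 0, 0)| <= K * enorm v) ->
  enorm (\row_(i < n) derive f z (evec i, (0:R), (0:'rV[R]_n))) <= K.
Proof.
move=> df K0 hK.
set g := \row_(i < n) _.
pose L (v : 'rV[R]_n) := 'd f z (v, (0:R), (0:'rV[R]_n)).
have LE v : derive f z (v, 0, 0) = L v by rewrite deriveE.
have L0 : L 0 = 0 by rewrite /L -[(0, 0, 0)]/(0 : 'rV[R]_n * R * 'rV[R]_n) linear0.
have LD v w : L (v + w) = L v + L w.
  rewrite /L -linearD; congr ('d f z _).
  by transitivity (v + w, (0:R) + 0, (0:'rV[R]_n) + 0); [rewrite !addr0 | reflexivity].
have LZ (k : R) v : L (k *: v) = k * L v.
  rewrite /L -[k * _]/(k *: _) -linearZ; congr ('d f z _).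
  by transitivity (k *: v, k *: (0:R), k *: (0:'rV[R]_n)); [rewrite !scaler0 | reflexivity].
have Ldot v : L v = dotv v g.
  rewrite {1}(row_sum_delta v) (big_morph L LD L0) /dotv; apply: eq_bigr => i _.
  by rewrite LZ /g mxE LE.
have := hK g; rewrite LE Ldot dotvv ger0_norm ?sqr_ge0 // => H.
have := enorm_ge0 g; nra.
Qed.
End G.

Section DR.
Context {R : realType}.
Implicit Types (f g : R -> R) (x df dg : R).

Lemma dM f g x df dg : is_derive x 1 f df -> is_derive x 1 g dg ->
  is_derive x 1 (fun y => f y * g y) (f x * dg + g x * df).
Proof. by move=> hf hg; have := is_deriveM hf hg. Qed.

Lemma dD f g x df dg : is_derive x 1 f df -> is_derive x 1 g dg ->
  is_derive x 1 (fun y => f y + g y) (df + dg).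
Proof. by move=> hf hg; have := is_deriveD hf hg. Qed.

Lemma dB f g x df dg : is_derive x 1 f df -> is_derive x 1 g dg ->
  is_derive x 1 (fun y => f y - g y) (df - dg).
Proof. by move=> hf hg; have := is_deriveB hf hg. Qed.

Lemma dcst (c x : R) : is_derive x 1 (fun _ => c) 0.
Proof. exact: is_derive_cst. Qed.

Lemma dlin (a x : R) : is_derive x 1 (fun y => a * y) a.
Proof.
apply: (is_derive_eq (f' := a *: (1:R))); last by rewrite /GRing.scale /= mulr1.
Qed.

Lemma dexp (a x : R) : is_derive x 1 (fun y => expR (a * y)) (a * expR (a * x)).
Proof.
apply: (is_derive_eq (f' := expR (a * x) * a)); last by rewrite mulrC.
try exact: (@is_derive1_comp R expR (fun y => a * y) x _ _ (is_derive_expR _) (dlin a x)).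
Qed.

Lemma dsq f x df : is_derive x 1 f df ->
  is_derive x 1 (fun y => f y ^+ 2) (2 * f x * df).
Proof.
move=> hf; apply: (is_derive_eq (f' := (2%:R * f x ^+ 1) *: df)).
  exact: (is_deriveX 2 hf).
by rewrite /GRing.scale /= expr1.
Qed.

Lemma dsqrt f x df : 0 < f x -> is_derive x 1 f df ->
  is_derive x 1 (fun y => Num.sqrt (f y)) (df / (2 * Num.sqrt (f x))).
Proof.
move=> fx hf; apply: (is_derive_eq (f' := (2 * Num.sqrt (f x))^-1 * df)); last by rewrite mulrC.
exact: (@is_derive1_comp R Num.sqrt f x _ _ (is_derive1_sqrt fx) hf).
Qed.

Lemma dsum n (F : 'I_n -> R -> R) x (dF : 'I_n -> R) :
  (forall i, is_derive x 1 (F i) (dF i)) ->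
  is_derive x 1 (fun y => \sum_(i < n) F i y) (\sum_(i < n) dF i).
Proof.
move=> h; have := is_derive_sum h.
have -> : (\sum_(i < n) F i) = (fun y => \sum_(i < n) F i y).
  by apply/funext => y; rewrite fct_sumE.
done.
Qed.
End DR.
Arguments dM {R f g x df dg}.
Arguments dD {R f g x df dg}.
Arguments dB {R f g x df dg}.
Arguments dsq {R f x df}.
Arguments dsqrt {R f x df}.
Arguments dsum {R n F x dF}.

Section WC.
Context {R : realType} (A : set R).
Implicit Types (f g : R -> R).

Lemma wcM f g : {within A, continuous f} -> {within A, continuous g} ->
  {within A, continuous (fun y => f y * g y)}.
Proof. by move=> hf hg x; apply: cvgM; [exact: hf | exact: hg]. Qed.

Lemma wcD f g : {within A, continuous f} -> {within A, continuous g} ->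
  {within A, continuous (fun y => f y + g y)}.
Proof. by move=> hf hg x; apply: cvgD; [exact: hf | exact: hg]. Qed.

Lemma wcB f g : {within A, continuous f} -> {within A, continuous g} ->
  {within A, continuous (fun y => f y - g y)}.
Proof. by move=> hf hg x; apply: cvgB; [exact: hf | exact: hg]. Qed.

Lemma wcG f : continuous f -> {within A, continuous f}.
Proof. by move=> hf; apply: continuous_subspaceT. Qed.

Lemma wcsqrt f : {within A, continuous f} -> {within A, continuous (fun y => Num.sqrt (f y))}.
Proof. by move=> hf x; apply: cvg_comp (hf x) (@sqrt_continuous R _). Qed.

Lemma wcexp f : {within A, continuous f} -> {within A, continuous (fun y => expR (f y))}.
Proof. by move=> hf x; apply: cvg_comp (hf x) (@continuous_expR R _). Qed.

Lemma wcsum n (F : 'I_n -> R -> R) : (forall i, {within A, continuous (F i)}) ->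
  {within A, continuous (fun y => \sum_(i < n) F i y)}.
Proof.
move=> h; elim: n F h => [|n IH] F h.
  have -> : (fun y => \sum_(i < 0) F i y) = (fun _ => 0).
    by apply/funext => y; rewrite big_ord0.
  exact/wcG/cst_continuous.
have -> : (fun y => \sum_(i < n.+1) F i y) = (fun y => F ord0 y + \sum_(i < n) F (lift ord0 i) y).
  by apply/funext => y; rewrite big_ord_recl.
by apply: wcD => //; apply: IH.
Qed.
End WC.

Section CMP.
Context {R : realType}.

Lemma cont_expl (a : R) : continuous (fun y => expR (a * y)).
Proof.
move=> x; have [d _] := dexp a x.
exact/differentiable_continuous/derivable1_diffP.
Qed.

Lemma compare_back (Phi Phid P : R -> R) (t C1 b k lam : R) :
  0 < t -> 0 <= C1 -> {within `[0, t], continuous Phi} -> {within `[0, t], continuous P} ->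
  (forall s, 0 < s < t -> is_derive s 1 Phi (Phid s)) ->
  (forall s, 0 < s < t -> is_derive s 1 P (expR ((C1 + lam) * s))) ->
  (forall s, 0 < s < t -> `|Phid s| <= C1 * (b * expR (lam * s) + k + Phi s)) ->
  Phi 0 + C1 * b * P 0 + k <= expR (C1 * t) * Phi t + C1 * b * P t + k * expR (C1 * t).
Proof.
move=> t0 C10 cPhi cP dPhi dP bnd.
pose G s := expR (C1 * s) * Phi s + C1 * b * P s + k * expR (C1 * s).
pose Gd s := (expR (C1 * s) * Phid s + Phi s * (C1 * expR (C1 * s))) +
   (C1 * b * expR ((C1 + lam) * s)) + (k * (C1 * expR (C1 * s))).
have dG s : 0 < s < t -> is_derive s 1 G (Gd s).
  move=> st; rewrite /G /Gd.
  apply: dD; first apply: dD.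
  - exact: (dM (dexp _ _) (dPhi s st)).
  - apply: (is_derive_eq (f' := C1 * b * expR ((C1 + lam) * s) + P s * 0)).
      exact: (dM (dcst _ _) (dP s st)).
    by rewrite mulr0 addr0.
  - apply: (is_derive_eq (f' := k * (C1 * expR (C1 * s)) + expR (C1 * s) * 0)).
      exact: (dM (dcst _ _) (dexp _ _)).
    by rewrite mulr0 addr0.
have cG : {within `[0, t], continuous G}.
  rewrite /G; apply: wcD; first apply: wcD.
  - by apply: wcM => //; apply: wcG; exact: cont_expl.
  - by apply: wcM => //; apply: wcG; exact: cst_continuous.
  - apply: wcM; first by apply: wcG; exact: cst_continuous.
    by apply: wcG; exact: cont_expl.
have [c /[!in_itv] /= ct E] := MVT t0 dG cG.
have Gd0 : 0 <= Gd c.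
  have := bnd c ct; rewrite ler_norml => /andP[lo _].
  have eC : 0 < expR (C1 * c) := expR_gt0 _.
  have eL : 0 < expR (lam * c) := expR_gt0 _.
  rewrite /Gd.
  have -> : expR ((C1 + lam) * c) = expR (C1 * c) * expR (lam * c) by rewrite mulrDl expRD.
  set E1 := expR (C1 * c) in eC lo *; set L1 := expR (lam * c) in eL lo *.
  nra.
have : 0 <= G t - G 0 by rewrite E subr0 mulr_ge0 // ltW.
rewrite /G !mulr0 expR0 mul1r mulr1 subr_ge0; lra.
Qed.

Lemma compare_fwd (Phi Phid Q : R -> R) (t C1 b k lam : R) :
  0 < t -> 0 <= C1 -> {within `[0, t], continuous Phi} -> {within `[0, t], continuous Q} ->
  (forall s, 0 < s < t -> is_derive s 1 Phi (Phid s)) ->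
  (forall s, 0 < s < t -> is_derive s 1 Q (expR ((lam - C1) * s))) ->
  (forall s, 0 < s < t -> `|Phid s| <= C1 * (b * expR (lam * s) + k + Phi s)) ->
  expR (- C1 * t) * Phi t - C1 * b * Q t + k * expR (- C1 * t) <= Phi 0 - C1 * b * Q 0 + k.
Proof.
move=> t0 C10 cPhi cQ dPhi dQ bnd.
pose G s := expR (- C1 * s) * Phi s - C1 * b * Q s + k * expR (- C1 * s).
pose Gd s := (expR (- C1 * s) * Phid s + Phi s * (- C1 * expR (- C1 * s))) -
   (C1 * b * expR ((lam - C1) * s)) + (k * (- C1 * expR (- C1 * s))).
have dG s : 0 < s < t -> is_derive s 1 G (Gd s).
  move=> st; rewrite /G /Gd.
  apply: dD; first apply: dB.
  - exact: (dM (dexp _ _) (dPhi s st)).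
  - apply: (is_derive_eq (f' := C1 * b * expR ((lam - C1) * s) + Q s * 0)).
      exact: (dM (dcst _ _) (dQ s st)).
    by rewrite mulr0 addr0.
  - apply: (is_derive_eq (f' := k * (- C1 * expR (- C1 * s)) + expR (- C1 * s) * 0)).
      exact: (dM (dcst _ _) (dexp _ _)).
    by rewrite mulr0 addr0.
have cG : {within `[0, t], continuous G}.
  rewrite /G; apply: wcD; first apply: wcB.
  - by apply: wcM => //; apply: wcG; exact: cont_expl.
  - by apply: wcM => //; apply: wcG; exact: cst_continuous.
  - apply: wcM; first by apply: wcG; exact: cst_continuous.
    by apply: wcG; exact: cont_expl.
have [c /[!in_itv] /= ct E] := MVT t0 dG cG.
have Gd0 : Gd c <= 0.
  have := bnd c ct; rewrite ler_norml => /andP[_ hi].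
  have eC : 0 < expR (- C1 * c) := expR_gt0 _.
  have eL : 0 < expR (lam * c) := expR_gt0 _.
  rewrite /Gd.
  have -> : expR ((lam - C1) * c) = expR (- C1 * c) * expR (lam * c) by rewrite -expRD; congr expR; ring.
  set E1 := expR (- C1 * c) in eC hi *; set L1 := expR (lam * c) in eL hi *.
  nra.
have : G t - G 0 <= 0 by rewrite E subr0 mulr_le0_ge0 // ltW.
rewrite /G !mulr0 expR0 mul1r mulr1 subr_le0; lra.
Qed.
End CMP.

Section PHI.
Context {R : realType} {n : nat}.

Lemma wcsq (A : set R) (f : R -> R) : {within A, continuous f} ->
  {within A, continuous (fun y => f y ^+ 2)}.
Proof.
move=> hf; have -> : (fun y => f y ^+ 2) = (fun y => f y * f y).
  by apply/funext => y; rewrite expr2.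
exact: wcM.
Qed.

Lemma phi_props (t lam C1 b dl : R) (eta eta' : R -> 'rV[R]_n) (c : 'rV[R]_n) :
  0 < t -> 0 <= C1 -> 0 < dl -> deriv_on 0 t eta eta' ->
  (forall s, 0 <= s <= t -> enorm (eta' s + lam *: eta s) <= C1 * (b + enorm (eta s))) ->
  let Phi := fun s => Num.sqrt (\sum_(i < n) (expR (lam * s) * eta s 0 i - c 0 i) ^+ 2 + dl) in
  {within `[0, t], continuous Phi} /\
  exists Phid : R -> R, (forall s, 0 < s < t -> is_derive s 1 Phi (Phid s)) /\
   (forall s, 0 < s < t -> `|Phid s| <= C1 * (b * expR (lam * s) + enorm c + Phi s)).
Proof.
move=> t0 C10 dl0 D hb Phi.
have ci i := @deriv_on_comp R n 0 t eta eta' i D.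
split.
  rewrite /Phi; apply: wcsqrt; apply: wcD; last exact/wcG/cst_continuous.
  apply: wcsum => i; apply: wcsq; apply: wcB; last exact/wcG/cst_continuous.
  apply: wcM; first exact/wcG/cont_expl.
  exact: (sderiv_cont _ _ _ _ t0 (ci i)).
pose W i s := expR (lam * s) * eta s 0 i - c 0 i.
pose Wd i s := expR (lam * s) * eta' s 0 i + eta s 0 i * (lam * expR (lam * s)) - 0.
pose Nd s := \sum_(i < n) 2 * W i s * Wd i s + 0.
exists (fun s => Nd s / (2 * Phi s)); split.
  move=> s st.
  have dW i : is_derive s 1 (fun y => expR (lam * y) * eta y 0 i - c 0 i) (Wd i s).
    exact: (dB (dM (dexp _ _) (sderiv_is_derive _ _ _ _ _ (ci i) st)) (dcst _ _)).
  apply: (dsqrt _ (dD (dsum (fun i => dsq (dW i))) (dcst dl s))).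
  by apply: ltr_wpDl => //; apply: sumr_ge0 => i _; rewrite sqr_ge0.
move=> s st.
have Phi0 : 0 < Phi s.
  by rewrite /Phi sqrtr_gt0; apply: ltr_wpDl => //; apply: sumr_ge0 => i _; rewrite sqr_ge0.
set e := expR (lam * s).
have e0 : 0 < e := expR_gt0 _.
set w := e *: eta s - c.
set d := eta' s + lam *: eta s.
have NdE : Nd s = 2 * e * dotv w d.
  rewrite /Nd addr0 /dotv mulr_sumr; apply: eq_bigr => i _.
  rewrite /W /Wd /w /d !mxE -/e; ring.
have ew : enorm w <= Phi s.
  rewrite /Phi /enorm; apply: ler_wsqrtr.
  have -> : \sum_(i < n) w 0 i ^+ 2 = \sum_(i < n) (e * eta s 0 i - c 0 i) ^+ 2.
    by apply: eq_bigr => i _; rewrite /w !mxE.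
  by rewrite lerDl ltW.
have ed : enorm d <= C1 * (b + enorm (eta s)).
  by apply: hb; case/andP: st => ? ?; rewrite !ltW.
have CS := abs_cauchy_schwarz w d.
have h1 : `|Nd s / (2 * Phi s)| <= e * enorm d.
  have P2 : 0 < 2 * Phi s by rewrite mulr_gt0.
  rewrite normrM normfV (gtr0_norm P2) ler_pdivrMr // NdE normrM (gtr0_norm (_ : 0 < 2 * e)) ?mulr_gt0 //.
  have k1 : `|dotv w d| <= Phi s * enorm d := le_trans CS (ler_wpM2r (enorm_ge0 d) ew).
  nra.
have h2 : e * enorm (eta s) <= Phi s + enorm c.
  have -> : e * enorm (eta s) = enorm (w + c) by rewrite /w subrK enormZ gtr0_norm.
  by apply: le_trans (enormD w c) _; lra.
apply: le_trans h1 _.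
have := enorm_ge0 (eta s); nra.
Qed.
End PHI.

Section RAW.
Context {R : realType} {n : nat}.

Lemma delta_lim (a B M : R) : 0 <= M ->
  (forall dl : R, 0 < dl -> a <= B + M * Num.sqrt dl) -> a <= B.
Proof.
move=> M0 h; rewrite leNgt; apply/negP => Bа.
set r := (a - B) / (M + 1).
have r0 : 0 < r by rewrite divr_gt0 // ?subr_gt0 // ltr_wpDl.
have := h (r ^+ 2) (exprn_gt0 _ r0); rewrite sqrtr_sqr gtr0_norm //.
have : M * r < a - B.
  rewrite /r mulrA ltr_pdivrMr ?ltr_wpDl // mulrC ltr_pM2l ?subr_gt0 //; lra.
lra.
Qed.

Lemma enorm_le_phi (v c : 'rV[R]_n) (dl : R) : 0 < dl ->
  enorm (v - c) <= Num.sqrt (\sum_(i < n) (v 0 i - c 0 i) ^+ 2 + dl).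
Proof.
move=> dl0; rewrite /enorm; apply: ler_wsqrtr.
have -> : \sum_(i < n) (v - c) 0 i ^+ 2 = \sum_(i < n) (v 0 i - c 0 i) ^+ 2.
  by apply: eq_bigr => i _; rewrite !mxE.
by rewrite lerDl ltW.
Qed.

Lemma back_raw (t lam C1 b : R) (eta eta' : R -> 'rV[R]_n) (P : R -> R) :
  0 < t -> 0 <= C1 -> deriv_on 0 t eta eta' ->
  (forall s, 0 <= s <= t -> enorm (eta' s + lam *: eta s) <= C1 * (b + enorm (eta s))) ->
  {within `[0, t], continuous P} ->
  (forall s, 0 < s < t -> is_derive s 1 P (expR ((C1 + lam) * s))) ->
  enorm (eta 0 - expR (lam * t) *: eta t)
   <= C1 * b * (P t - P 0) + enorm (expR (lam * t) *: eta t) * (expR (C1 * t) - 1).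
Proof.
move=> t0 C10 D hb cP dP.
set c := expR (lam * t) *: eta t.
apply: (@delta_lim _ _ (expR (C1 * t))); first exact: ltW (expR_gt0 _).
move=> dl dl0.
have [cPhi [Phid [dPhi bPhi]]] := @phi_props R n t lam C1 b dl eta eta' c t0 C10 dl0 D hb.
have := compare_back _ _ _ _ _ _ _ _ t0 C10 cPhi cP dPhi dP bPhi.
have -> : \sum_(i < n) (expR (lam * t) * eta t 0 i - c 0 i) ^+ 2 = 0.
  by rewrite big1 // => i _; rewrite /c mxE subrr expr0n.
rewrite add0r mulr0 expR0.
have := enorm_le_phi (eta 0) c _ dl0.
have -> : \sum_(i < n) (eta 0 0 i - c 0 i) ^+ 2 = \sum_(i < n) (1 * eta 0 0 i - c 0 i) ^+ 2.
  by apply: eq_bigr => i _; rewrite mul1r.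
lra.
Qed.

Lemma fwd_raw (t lam C1 b : R) (eta eta' : R -> 'rV[R]_n) (Q : R -> R) :
  0 < t -> 0 <= C1 -> deriv_on 0 t eta eta' ->
  (forall s, 0 <= s <= t -> enorm (eta' s + lam *: eta s) <= C1 * (b + enorm (eta s))) ->
  {within `[0, t], continuous Q} ->
  (forall s, 0 < s < t -> is_derive s 1 Q (expR ((lam - C1) * s))) ->
  expR (- C1 * t) * enorm (expR (lam * t) *: eta t - eta 0)
   <= C1 * b * (Q t - Q 0) + enorm (eta 0) * (1 - expR (- C1 * t)).
Proof.
move=> t0 C10 D hb cQ dQ.
set c := eta 0.
apply: (@delta_lim _ _ 1); first exact: ler01.
move=> dl dl0.
have [cPhi [Phid [dPhi bPhi]]] := @phi_props R n t lam C1 b dl eta eta' c t0 C10 dl0 D hb.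
have := compare_fwd _ _ _ _ _ _ _ _ t0 C10 cPhi cQ dPhi dQ bPhi.
have -> : \sum_(i < n) (expR (lam * 0) * eta 0 0 i - c 0 i) ^+ 2 = 0.
  by rewrite big1 // => i _; rewrite /c mulr0 expR0 mul1r subrr expr0n.
rewrite add0r.
have := enorm_le_phi (expR (lam * t) *: eta t) c _ dl0.
have -> : \sum_(i < n) ((expR (lam * t) *: eta t) 0 i - c 0 i) ^+ 2 =
          \sum_(i < n) (expR (lam * t) * eta t 0 i - c 0 i) ^+ 2.
  by apply: eq_bigr => i _; rewrite !mxE.
have e0 : 0 < expR (- C1 * t) := expR_gt0 _.
set S := Num.sqrt _; set N := enorm _.
move=> NS H.
have : expR (- C1 * t) * N <= expR (- C1 * t) * S by rewrite ler_pM2l.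
lra.
Qed.
End RAW.

Section PRIM.
Context {R : realType}.

Lemma cont_of_derive (f df : R -> R) : (forall s : R, is_derive s 1 f (df s)) -> continuous f.
Proof.
move=> h x; have [d _] := h x.
exact/differentiable_continuous/derivable1_diffP.
Qed.

Lemma prim_exp (a : R) : a != 0 ->
  forall s : R, is_derive s 1 (fun y => expR (a * y) * a^-1) (expR (a * s)).
Proof.
move=> a0 s; apply: (is_derive_eq (f' := expR (a * s) * 0 + a^-1 * (a * expR (a * s)))).
  exact: (dM (dexp _ _) (dcst _ _)).
by rewrite mulr0 add0r mulrA mulVf ?mul1r.
Qed.

Lemma prim_id (a : R) : a = 0 -> forall s : R, is_derive s 1 (fun y => y) (expR (a * s)).
Proof.
move=> -> s; rewrite mul0r expR0.
exact: (@is_derive_id _ R s 1).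
Qed.
End PRIM.

Section B4.
Context {R : realType} {n : nat}.

Lemma bounds4 (t lam C1 b : R) (eta eta' : R -> 'rV[R]_n) :
  0 < t -> 0 <= C1 -> deriv_on 0 t eta eta' ->
  (forall s, 0 <= s <= t -> enorm (eta' s + lam *: eta s) <= C1 * (b + enorm (eta s))) ->
  let L := expR (lam * t) in let El := expR (C1 * t) in
  let N := enorm (L *: eta t - eta 0) in
  [/\ lam != - C1 ->
        N <= C1 * b * (El * L * (C1 + lam)^-1 - (C1 + lam)^-1) + L * enorm (eta t) * (El - 1),
      lam = - C1 -> N <= C1 * b * t + L * enorm (eta t) * (El - 1),
      lam != C1 ->
        El^-1 * N <= C1 * b * (L * El^-1 * (lam - C1)^-1 - (lam - C1)^-1)
                     + enorm (eta 0) * (1 - El^-1) &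
      lam = C1 -> El^-1 * N <= C1 * b * t + enorm (eta 0) * (1 - El^-1)].
Proof.
move=> t0 C10 D hb L El N.
have eN : N = enorm (eta 0 - L *: eta t) by rewrite /N enormB.
have eZ : enorm (L *: eta t) = L * enorm (eta t).
  by rewrite enormZ gtr0_norm ?expR_gt0.
have eC : expR (- C1 * t) = El^-1 by rewrite mulNr expRN.
split.
- move=> hl; have a0 : C1 + lam != 0.
    by apply: contraNneq hl => h; apply/eqP; rewrite -[lam](addKr C1) h addr0.
  have dP := prim_exp _ a0.
  have := @back_raw R n t lam C1 b eta eta' _ t0 C10 D hb (wcG _ _ (cont_of_derive _ _ dP)) (fun s _ => dP s).
  rewrite -/L -/El eN eZ mulr0 expR0 mul1r mulrDl expRD.
  by rewrite -/L -/El [_ * L]mulrC.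
- move=> hl; have a0 : C1 + lam = 0 by rewrite hl addrN.
  have dP := prim_id _ a0.
  have := @back_raw R n t lam C1 b eta eta' _ t0 C10 D hb (wcG _ _ (cont_of_derive _ _ dP)) (fun s _ => dP s).
  by rewrite -/L -/El eN eZ subr0.
- move=> hl; have a0 : lam - C1 != 0 by rewrite subr_eq0.
  have dQ := prim_exp _ a0.
  have := @fwd_raw R n t lam C1 b eta eta' _ t0 C10 D hb (wcG _ _ (cont_of_derive _ _ dQ)) (fun s _ => dQ s).
  have eQ : expR ((lam - C1) * t) = L / El by rewrite mulrBl expRD expRN.
  by rewrite -/L eC mulr0 expR0 mul1r eQ.
- move=> hl; have a0 : lam - C1 = 0 by rewrite hl subrr.
  have dQ := prim_id _ a0.
  have := @fwd_raw R n t lam C1 b eta eta' _ t0 C10 D hb (wcG _ _ (cont_of_derive _ _ dQ)) (fun s _ => dQ s).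
  by rewrite -/L eC subr0.
Qed.
End B4.

Section TRI.
Context {R : realType} {n : nat}.
Lemma tri_a (u v : 'rV[R]_n) : enorm v <= enorm u + enorm (u - v).
Proof. by have := enormD u (v - u); rewrite addrC subrK enormB. Qed.
Lemma tri_b (u v : 'rV[R]_n) : enorm u <= enorm v + enorm (u - v).
Proof. by have := enormD v (u - v); rewrite addrC subrK. Qed.
Lemma key_sub (u w : 'rV[R]_n) (L : R) : 0 < L ->
  enorm (u - L^-1 *: w) = L^-1 * enorm (L *: u - w).
Proof.
move=> L0; rewrite -[in RHS](gtr0_norm (_ : 0 < L^-1)) ?invr_gt0 // -enormZ.
by rewrite scalerBr scalerA mulVf ?gt_eqF // scale1r.
Qed.
End TRI.

Theorem proposition6p1 (R : realType) (n : nat) (T lam C1 beta A2 B2 : R)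
  (H0 : 'rV[R]_n -> R -> 'rV[R]_n -> R) (u0 : 'rV[R]_n -> R)
  (u : 'rV[R]_n -> R -> R) (x : 'rV[R]_n) (t : R) (xi eta : R -> 'rV[R]_n) :
  0 < T ->
  (* u0 Lipschitz *)
  (exists L : R, forall y z, `|u0 y - u0 z| <= L * enorm (y - z)) ->
  (* (a) *)
  0 <= C1 -> (beta = 0 \/ beta = 1) ->
  (forall (y z : 'rV[R]_n) (s : R) (p : 'rV[R]_n), 0 <= s <= T ->
     `|H0 y s p - H0 z s p| <= C1 * (beta + enorm p) * enorm (y - z)) ->
  (* (b) *)
  0 <= A2 -> 0 <= B2 ->
  (forall (y : 'rV[R]_n) (s : R) (p q : 'rV[R]_n), 0 <= s <= T ->
     `|H0 y s p - H0 y s q| <= (A2 * enorm y + B2) * enorm (p - q)) ->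
  (* (c) convexity in p *)
  (forall (y : 'rV[R]_n) (s : R) (p q : 'rV[R]_n) (a : R), 0 <= s <= T ->
     0 <= a <= 1 ->
     H0 y s (a *: p + (1 - a) *: q) <= a * H0 y s p + (1 - a) * H0 y s q) ->
  (* (d) C^2 (on an open neighbourhood of R^n x [0,T] x R^n) *)
  (exists eps : R, 0 < eps /\
     C2_on (Hunc H0) [set z | - eps < z.1.2 < T + eps]) ->
  (* (e) D_pp H0 positive definite *)
  (forall (y : 'rV[R]_n) (s : R) (p : 'rV[R]_n), 0 <= s <= T ->
     posdef (DppH H0 y s p)) ->
  (* u viscosity solution *)
  visc_solution T lam H0 u0 u ->
  0 < t < T ->
  differentiable (uncurry_xt u) (x, t) ->
  (* characteristic system on [0,t] *)
  deriv_on 0 t xi (fun s => DpH H0 (xi s) s (eta s)) ->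
  deriv_on 0 t eta (fun s => - DxH H0 (xi s) s (eta s) - lam *: eta s) ->
  xi t = x -> eta t = gradx (uncurry_xt u) (x, t) ->
  let Du := gradx (uncurry_xt u) (x, t) in
  [/\ (lam != - C1 ->
        enorm (Du - expR (- lam * t) *: eta 0)
        <= C1 * beta / (C1 + lam) * (expR (C1 * t) - expR (- lam * t))
           + enorm Du * (expR (C1 * t) - 1)),
      (lam = - C1 ->
        enorm (Du - expR (C1 * t) *: eta 0)
        <= C1 * beta * t * expR (C1 * t) + enorm Du * (expR (C1 * t) - 1)),
      (lam != C1 ->
        enorm (Du - expR (- lam * t) *: eta 0)
        <= C1 * beta / (C1 - lam) * (expR ((C1 - lam) * t) - 1)
           + enorm (eta 0) * (expR ((C1 - lam) * t) - expR (- lam * t))) &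
      (lam = C1 ->
        enorm (Du - expR (- C1 * t) *: eta 0)
        <= C1 * beta * t + enorm (eta 0) * (1 - expR (- C1 * t)))] /\
  [/\ (lam != - C1 ->
        enorm (eta 0) * expR (- (C1 + lam) * t)
          - C1 * beta / (C1 + lam) * (1 - expR (- (C1 + lam) * t)) <= enorm Du),
      (lam = - C1 -> enorm (eta 0) - C1 * beta * t <= enorm Du),
      (lam != C1 ->
        enorm Du <= enorm (eta 0) * expR ((C1 - lam) * t)
          + C1 * beta / (C1 - lam) * (expR ((C1 - lam) * t) - 1)) &
      (lam = C1 -> enorm Du <= enorm (eta 0) + C1 * beta * t)].
Proof.
move=> T0 _ C10 hbeta Ha _ _ _ _ HC2 _ _ tT _ _ D2 _ etat Du.
have b0 : 0 <= beta by case: hbeta => ->.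
have /andP[t0 tT'] := tT.
have [eps [eps0 [[Hdiff _] _]]] := HC2.
pose eta' := fun s => - DxH H0 (xi s) s (eta s) - lam *: eta s.
have hb : forall s, 0 <= s <= t -> enorm (eta' s + lam *: eta s) <= C1 * (beta + enorm (eta s)).
  move=> s /andP[s0 st].
  rewrite /eta' subrK enormN.
  have sT : 0 <= s <= T by rewrite s0 ltW // (le_lt_trans st tT').
  have dz : differentiable (Hunc H0) (xi s, s, eta s).
    apply: Hdiff => /=; apply/andP; split; lra.
  apply: grad_enorm_le => //; first by rewrite mulr_ge0 // addr_ge0 // enorm_ge0.
  move=> v; apply: deriv_dir_bound => // y.
  exact: (Ha y (xi s) s (eta s) sT).
have [Q1 Q2 Q3 Q4] := @bounds4 R n t lam C1 beta eta eta' t0 C10 D2 hb.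
rewrite /Du -etat {Du}.
set L := expR (lam * t) in Q1 Q2 Q3 Q4 *.
set El := expR (C1 * t) in Q1 Q2 Q3 Q4 *.
set N := enorm (L *: eta t - eta 0) in Q1 Q2 Q3 Q4 *.
set a := enorm (eta 0) in Q3 Q4 *.
set d := enorm (eta t) in Q1 Q2 *.
have L0 : 0 < L := expR_gt0 _.
have E0 : 0 < El := expR_gt0 _.
have N0 : 0 <= N := enorm_ge0 _.
have a0 : 0 <= a := enorm_ge0 _.
have d0 : 0 <= d := enorm_ge0 _.
have eNl : expR (- lam * t) = L^-1 by rewrite mulNr expRN.
have eNC : expR (- C1 * t) = El^-1 by rewrite mulNr expRN.
have eCl : expR ((C1 - lam) * t) = El * L^-1 by rewrite mulrBl expRD expRN.
have eNCl : expR (- (C1 + lam) * t) = (El * L)^-1 by rewrite mulNr expRN mulrDl expRD.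
have K := key_sub (eta t) (eta 0) _ L0; rewrite -/N in K.
have iL0 : 0 < L^-1 by rewrite invr_gt0.
have iE0 : 0 < El^-1 by rewrite invr_gt0.
have G1 : lam != - C1 -> enorm (eta t - expR (- lam * t) *: eta 0)
    <= C1 * beta / (C1 + lam) * (El - expR (- lam * t)) + d * (El - 1).
  move=> hl; have c0 : C1 + lam != 0.
    by apply: contraNneq hl => h; apply/eqP; rewrite -[lam](addKr C1) h addr0.
  rewrite eNl K; apply: le_trans (ler_wpM2l (ltW iL0) (Q1 hl)) _.
  rewrite le_eqVlt; apply/orP; left; apply/eqP; field.
  by rewrite c0 gt_eqF.
have G2 : lam = - C1 -> enorm (eta t - expR (C1 * t) *: eta 0)
    <= C1 * beta * t * expR (C1 * t) + d * (expR (C1 * t) - 1).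
  move=> hl; have eE : El = L^-1 by rewrite /L /El hl mulNr expRN invrK.
  rewrite -/El eE K; apply: le_trans (ler_wpM2l (ltW iL0) (Q2 hl)) _.
  rewrite -eE le_eqVlt; apply/orP; left; apply/eqP; rewrite eE; field.
  by rewrite gt_eqF.
have G3 : lam != C1 -> enorm (eta t - expR (- lam * t) *: eta 0)
    <= C1 * beta / (C1 - lam) * (expR ((C1 - lam) * t) - 1)
       + a * (expR ((C1 - lam) * t) - expR (- lam * t)).
  move=> hl; have c0 : lam - C1 != 0 by rewrite subr_eq0.
  have c1 : C1 - lam != 0 by rewrite subr_eq0 eq_sym.
  rewrite eNl eCl K.
  have -> : L^-1 * N = El * L^-1 * (El^-1 * N) by field; rewrite !gt_eqF.
  apply: le_trans (ler_wpM2l (ltW (mulr_gt0 E0 iL0)) (Q3 hl)) _.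
  rewrite le_eqVlt; apply/orP; left; apply/eqP; field.
  by rewrite c0 c1 !gt_eqF.
have G4 : lam = C1 -> enorm (eta t - expR (- C1 * t) *: eta 0)
    <= C1 * beta * t + a * (1 - expR (- C1 * t)).
  move=> hl; have eE : El = L by rewrite /L /El hl.
  by rewrite eNC eE K -eE; apply: Q4.
split; split.
- exact: G1.
- exact: G2.
- exact: G3.
- exact: G4.
- move=> hl; have c0 : C1 + lam != 0.
    by apply: contraNneq hl => h; apply/eqP; rewrite -[lam](addKr C1) h addr0.
  have g := G1 hl; have tr := tri_a (eta t) (expR (- lam * t) *: eta 0).
  rewrite enormZ gtr0_norm ?expR_gt0 // -/a -/d in tr.
  rewrite eNl in g tr; rewrite eNCl -subr_le0.
  set X := L^-1 * a - d - (C1 * beta / (C1 + lam) * (El - L^-1) + d * (El - 1)).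
  have -> : a * (El * L)^-1 - C1 * beta / (C1 + lam) * (1 - (El * L)^-1) - d = El^-1 * X.
    by rewrite /X; field; rewrite c0 !gt_eqF.
  by apply: mulr_ge0_le0; [exact: ltW | rewrite /X; lra].
- move=> hl; have g := G2 hl; have tr := tri_a (eta t) (expR (C1 * t) *: eta 0).
  rewrite enormZ gtr0_norm ?expR_gt0 // -/a -/d -/El in tr; rewrite -/El in g.
  rewrite -subr_le0.
  set X := El * a - d - (C1 * beta * t * El + d * (El - 1)).
  have -> : a - C1 * beta * t - d = El^-1 * X.
    by rewrite /X; field; rewrite !gt_eqF.
  by apply: mulr_ge0_le0; [exact: ltW | rewrite /X; lra].
- move=> hl; have c1 : C1 - lam != 0 by rewrite subr_eq0 eq_sym.
  have g := G3 hl; have tr := tri_b (eta t) (expR (- lam * t) *: eta 0).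
  rewrite enormZ gtr0_norm ?expR_gt0 // -/a -/d in tr.
  rewrite eNl eCl in g tr; rewrite eCl.
  apply: le_trans tr _; rewrite -subr_ge0.
  set X := _ - _ in g *.
  have -> : a * (El / L) + C1 * beta / (C1 - lam) * (El / L - 1) - (L^-1 * a + enorm (eta t - L^-1 *: eta 0))
     = C1 * beta / (C1 - lam) * (El / L - 1) + a * (El / L - L^-1) - enorm (eta t - L^-1 *: eta 0).
    by field; rewrite c1 !gt_eqF.
  by rewrite subr_ge0.
- move=> hl; have g := G4 hl; have tr := tri_b (eta t) (expR (- C1 * t) *: eta 0).
  rewrite enormZ gtr0_norm ?expR_gt0 // -/a -/d in tr.
  rewrite eNC in g tr.
  apply: le_trans tr _; rewrite -subr_ge0.
  have -> : a + C1 * beta * t - (El^-1 * a + enorm (eta t - El^-1 *: eta 0))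
     = C1 * beta * t + a * (1 - El^-1) - enorm (eta t - El^-1 *: eta 0) by ring.
  by rewrite subr_ge0.
Qed.
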